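(* Let $E$ be a real topological vector space, $\Omega$ a nonempty open subset of $E$, and $f_0,\dots,f_m:\Omega\to\mathbb{R}$. Let $\hat{x}$ be a solution of the problem $(\mathcal{P}_1)$: maximize $f_0(x)$ subject to $x\in\Omega$ and $f_i(x)\ge0$ for all $i\in\{1,\dots,m\}$. Assume that $f_j$ is lower semicontinuous at $\hat{x}$ for every $j\in\{1,\dots,m\}$ with $f_j(\hat{x})>0$, that each $f_i$ ($0\le i\le m$) is $D^-_M$-differentiable at $\hat{x}$, and that, after reindexing, $\{i\in\{1,\dots,m\}:f_i(\hat{x})=0\}=\{1,\dots,l\}$ with $l\ge1$. For $p\in\{0,\dots,l\}$ let $A_p=\{u\in E: D^-_Mf_i(\hat{x})(u)>0\ \text{for all } i\in\{p,\dots,l\}\}$. If $A_l\neq\emptyset$, then $A_0=\emptyset$; equivalently, $k:=\min\{i\in\{0,\dots,l\}:A_i\neq\emptyset\}$ satisfies $k\ge1$.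
   Context: $D^-f(x)(u):=\liminf_{t\to0^+}\frac{f(x+tu)-f(x)}{t}$ (with $D^-f(x)(0)=0$); $D^-_Mf(x)(u):=\inf_{w\in E}\{D^-f(x)(u+w)-D^-f(x)(w)\}$; $f$ is $D^-_M$-differentiable at $x$ if both are finite for every $u\in E$. *)

(* Defs.v *)
From HB Require Import structures.
From mathcomp Require Import all_boot all_order all_algebra.
From mathcomp Require Import all_classical all_reals all_analysis.
Set Implicit Arguments. Unset Strict Implicit. Unset Printing Implicit Defensive.
Import Order.TTheory GRing.Theory Num.Theory.
Import numFieldNormedType.Exports.
Local Open Scope classical_set_scope.
Local Open Scope ring_scope.

Section Defs.
Context {R : realType} {E : topologicalLmodType R}.

Definition lowerDini (f : E -> R) (x u : E) : \bar R :=
  if u == 0 then 0%E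
  else limf_einf (fun t : R => ((f (x + t *: u) - f x) / t)%:E) (0^'+).

Definition lowerDiniM (f : E -> R) (x u : E) : \bar R :=
  ereal_inf [set (lowerDini f x (u + w)%R - lowerDini f x w)%E | w in [set: E]].

Definition DM_differentiable (f : E -> R) (x : E) : Prop :=
  forall u : E, lowerDini f x u \is a fin_num /\ lowerDiniM f x u \is a fin_num.

Definition lsc_at (f : E -> R) (x : E) : Prop :=
  forall a : R, a < f x -> \forall y \near x, a < f y.

Definition Aset (f : nat -> E -> R) (xh : E) (l p : nat) : set E :=
  [set u | forall i, (p <= i <= l)%N -> (0 < lowerDiniM (f i) xh u)%E].

End Defs.

(* Main.v *)
Require Import Defs.
From HB Require Import structures.
From mathcomp Require Import all_boot all_order all_algebra.
From mathcomp Require Import all_classical all_reals all_analysis.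
Import Order.TTheory GRing.Theory Num.Theory.
Import numFieldNormedType.Exports.
Local Open Scope classical_set_scope.
Local Open Scope ring_scope.

Lemma einf_pos (R : realType) (g : R -> R) :
  (0 < limf_einf (fun t : R => (g t)%:E) (0%R^'+))%E ->
  \forall t \near 0%R^'+, 0 < g t.
Proof.
rewrite limf_einfE => /ereal_sup_gt [y [V FV <-] yg].
apply: filterS FV => t Vt.
have : (ereal_inf [set (g x)%:E | x in V] <= (g t)%:E)%E.
  by apply: ereal_inf_lbound; exists t.
by move=> h; rewrite -lte_fin; apply: lt_le_trans h.
Qed.

Lemma lineP (R : realType) (E : topologicalLmodType R) (xh u : E) :
  (fun t : R => xh + t *: u) @ 0%R^'+ --> xh.
Proof.
apply: cvg_within_filter.
suff : (fun t : R => xh + t *: u) @ nbhs (0:R) --> xh + (0:R) *: u by rewrite scale0r addr0.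
apply: (@continuous2_cvg _ E E E _ _ (fun=> xh) (fun t : R => t *: u) (fun a b => a + b)).
- move=> A; apply: (add_continuous (xh, 0 *: u)).
- exact: cvg_cst.
apply: (@continuous2_cvg _ R^o E E _ _ (fun t : R => t) (fun=> u) (fun a b => a *: b)).
- exact: (scale_continuous (0:R^o, u)).
- exact: cvg_id.
- exact: cvg_cst.
Qed.

Theorem lemma3p7 (R : realType) (E : topologicalLmodType R) (Omega : set E)
  (m l : nat) (f : nat -> E -> R) (xh : E) :
  open Omega -> Omega !=set0 ->
  (* xh solves (P1): maximize f_0 on Omega subject to f_i >= 0, 1 <= i <= m *)
  Omega xh -> (forall i, (1 <= i <= m)%N -> 0 <= f i xh) ->
  (forall x, Omega x -> (forall i, (1 <= i <= m)%N -> 0 <= f i x) ->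
     f 0%N x <= f 0%N xh) ->
  (* lower semicontinuity of the inactive constraints *)
  (forall j, (1 <= j <= m)%N -> 0 < f j xh -> lsc_at (f j) xh) ->
  (* D^-_M-differentiability of f_0, ..., f_m at xh *)
  (forall i, (i <= m)%N -> DM_differentiable (f i) xh) ->
  (* active constraints are exactly 1, ..., l with l >= 1 *)
  (1 <= l <= m)%N ->
  (forall i, (1 <= i <= m)%N -> (f i xh = 0 <-> (i <= l)%N)) ->
  Aset f xh l l !=set0 -> Aset f xh l 0 = set0.
Proof.
move=> oO _ Oxh fge0 opt lsc _ /andP[l1 lm] act _.
rewrite -subset0 => u Au.
have Hd i : (i <= l)%N -> (0 < lowerDini (f i) xh u)%E.
  move=> il; have := Au i il; move/lt_le_trans; apply.
  have -> : lowerDini (f i) xh u = (lowerDini (f i) xh (u + 0)%R - lowerDini (f i) xh 0%R)%E.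
    by rewrite addr0 /lowerDini eqxx sube0.
  by apply: ereal_inf_lbound; exists (0:E).
have u0 : u != 0.
  by apply/negP => /eqP u0; have := Hd 0%N isT; rewrite u0 /lowerDini eqxx ltxx.
have Hn i : (i <= l)%N -> \forall t \near (0:R)^'+, f i xh < f i (xh + t *: u).
  move=> il; have := Hd i il; rewrite /lowerDini (negbTE u0) => /einf_pos.
  apply: filter_app; near=> t => /=.
  have tp : 0 < t by near: t; exact: nbhs_right_gt.
  by rewrite pmulr_lgt0 ?invr_gt0 // subr_gt0.
have cv := @lineP R E xh u.
have HO : \forall t \near (0:R)^'+, Omega (xh + t *: u).
  by apply: cv; apply: open_nbhs_nbhs; split.
have Hin : \forall t \near (0:R)^'+, forall i : 'I_m.+1, (l < i)%N -> 0 < f i (xh + t *: u).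
  apply: filter_forall => i; case: (ltnP l i) => li; last by near=> t.
  have im : (1 <= i <= m)%N by rewrite (ltn_trans l1 li) -ltnS ltn_ord.
  have pos : 0 < f i xh.
    rewrite lt_def fge0 // andbT; apply/negP => /eqP /(act i im); by rewrite leqNgt li.
  have h0 := lsc i im pos 0 pos; have h1 := cv _ h0; near=> t => _; near: t; exact: h1.
have Hac : \forall t \near (0:R)^'+, forall i : 'I_m.+1, (i <= l)%N -> f i xh < f i (xh + t *: u).
  apply: filter_forall => i; case: (leqP i l) => li; last by near=> t.
  by apply: filter_app (Hn i li); near=> t => h _.
have [t [Ot Hi Ha]] : exists t, [/\ Omega (xh + t *: u),
   forall i : 'I_m.+1, (l < i)%N -> 0 < f i (xh + t *: u) &
   forall i : 'I_m.+1, (i <= l)%N -> f i xh < f i (xh + t *: u)].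
  apply: (@filter_ex _ (0:R)^'+); near=> t; split; near: t; [exact: HO|exact: Hin|exact: Hac].
have Hc : forall i, (1 <= i <= m)%N -> 0 <= f i (xh + t *: u).
  move=> i /andP[i1 im].
  have io : (i < m.+1)%N by rewrite ltnS.
  case: (leqP i l) => li.
    have := Ha (Ordinal io) li; rewrite /=; move/ltW; apply: le_trans.
    by rewrite le_eqVlt; apply/orP; left; apply/eqP; symmetry; apply/(act i); rewrite ?i1.
  by apply/ltW; exact: (Hi (Ordinal io) li).
by have := opt _ Ot Hc; rewrite leNgt (Ha ord0 (leq0n _)).
Unshelve. all: by end_near.
Qed.
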